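(* Let $R$ be a tolerance relation on $\{1,\ldots,n\}$, $A(R)$, $T$ as in the context, and let $v\in\mathbb{C}^n$ be a unit vector. Then $T(P_v)$ is the weak density matrix of a pure state of $A(R)$ (i.e. the state $a\mapsto\mathrm{Tr}(T(P_v)a)$ of $A(R)$ is pure) if and only if $v$ is $R$-tolerant. More precisely, the restriction map $F:\mathcal{S}(M_n(\mathbb{C}))\to\mathcal{S}(A(R))$ gives a bijection between the set of $R$-tolerant pure states of $M_n(\mathbb{C})$ and the set of pure states of $A(R)$.
   Context: A tolerance relation on a set is a reflexive and symmetric relation; its graph has an edge between $i\ne j$ whenever $(i,j)\in R$. $T(b)=\sum_{(i,j)\in R}E_{ii}bE_{jj}$ for $b\in M_n(\mathbb{C})$, and $A(R)=T(M_n(\mathbb{C}))$, an operator system whose states are linear functionals $\varphi$ with $\varphi(a)\ge0$ for positive semidefinite $a\in A(R)$ and $\varphi(1)=1$; pure states are extremal states. For a unit vector $v$, $P_v=(v_i\overline{v_j})_{i,j}$ is the orthogonal projection onto $\mathbb{C}v$. For non-zero $v$, $R_v:=\{(i,j)\in R: v_iv_j\ne0\}$, a tolerance relation on $\{i: v_i\neq 0\}$; $v$ is $R$-tolerant if the graph of $R_v$ is connected. A pure state of $M_n(\mathbb{C})$ is $R$-tolerant if its density matrix is $P_v$ for an $R$-tolerant unit vector $v$. $F$ sends a state of $M_n(\mathbb{C})$ to its restriction to $A(R)$. *)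

(* Defs.v *)
From mathcomp Require Import all_boot all_algebra.
From mathcomp Require Import complex reals.
Set Implicit Arguments. Unset Strict Implicit. Unset Printing Implicit Defensive.
Import GRing.Theory Num.Theory.
Local Open Scope ring_scope.

Section Defs.
Variables (K : realType) (n : nat).
Local Notation C := (K[i]).

Definition tolerance (R : rel 'I_n) : Prop := reflexive R /\ symmetric R.

(* the full relation: A(full) = M_n(C) *)
Definition full_rel : rel 'I_n := fun _ _ => true.

(* T(b) = sum_{(i,j) in R} E_ii b E_jj, written entrywise *)
Definition Tmap (R : rel 'I_n) (b : 'M[C]_n) : 'M[C]_n :=
  \matrix_(i, j) (if R i j then b i j else 0).

Definition in_AR (R : rel 'I_n) (a : 'M[C]_n) : Prop := exists b, a = Tmap R b.

Definition psd (a : 'M[C]_n) : Prop :=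
  forall x : 'cV[C]_n, 0 <= ((map_mx Num.conj x)^T *m a *m x) 0 0.

(* a state of A(R): phi is a function on M_n(C), only its values on A(R) matter *)
Definition stateA (R : rel 'I_n) (phi : 'M[C]_n -> C) : Prop :=
  [/\ (forall a b, in_AR R a -> in_AR R b -> phi (a + b) = phi a + phi b),
      (forall (c : C) a, in_AR R a -> phi (c *: a) = c * phi a),
      (forall a, in_AR R a -> psd a -> 0 <= phi a)
    & phi 1%:M = 1].

Definition pure_stateA (R : rel 'I_n) (phi : 'M[C]_n -> C) : Prop :=
  stateA R phi /\
  forall (t : C) (phi1 phi2 : 'M[C]_n -> C),
    0 < t < 1 -> stateA R phi1 -> stateA R phi2 ->
    (forall a, in_AR R a -> phi a = t * phi1 a + (1 - t) * phi2 a) ->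
    forall a, in_AR R a -> phi1 a = phi a /\ phi2 a = phi a.

Definition unit_vec (v : 'I_n -> C) : Prop := \sum_i v i * (v i)^* = 1.

Definition Pv (v : 'I_n -> C) : 'M[C]_n := \matrix_(i, j) (v i * (v j)^*).

Definition Rv (R : rel 'I_n) (v : 'I_n -> C) : rel 'I_n :=
  fun i j => [&& R i j, v i != 0 & v j != 0].

Definition R_tolerant (R : rel 'I_n) (v : 'I_n -> C) : Prop :=
  (exists i, v i != 0) /\
  forall i j, v i != 0 -> v j != 0 -> connect (Rv R v) i j.

Definition R_tolerant_pure_state (R : rel 'I_n) (om : 'M[C]_n -> C) : Prop :=
  pure_stateA full_rel om /\
  exists v, unit_vec v /\ R_tolerant R v /\ forall a, om a = \tr (Pv v *m a).

End Defs.

(* Main.v *)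
Require Import Defs.
From mathcomp Require Import all_boot all_algebra.
From mathcomp Require Import complex reals.
From mathcomp Require Import classical_sets.
From mathcomp Require Import order ring.
From Stdlib Require Import ClassicalEpsilon.
Set Implicit Arguments. Unset Strict Implicit. Unset Printing Implicit Defensive.
Import Order.TTheory GRing.Theory Num.Theory.
Local Open Scope ring_scope.



Section Basics.
Variable K : realType.
Local Notation C := (K[i]).

Definition adj m p (A : 'M[C]_(m,p)) : 'M[C]_(p,m) := (map_mx Num.conj A)^T.

Lemma adjE m p (A : 'M[C]_(m,p)) i j : adj A i j = (A j i)^*.
Proof. by rewrite !mxE. Qed.

Lemma adjK m p (A : 'M[C]_(m,p)) : adj (adj A) = A.
Proof. by apply/matrixP => i j; rewrite !adjE conjCK. Qed.

Lemma adjD m p (A B : 'M[C]_(m,p)) : adj (A + B) = adj A + adj B.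
Proof. by apply/matrixP => i j; rewrite !mxE rmorphD. Qed.

Lemma adjZ m p c (A : 'M[C]_(m,p)) : adj (c *: A) = c^* *: adj A.
Proof. by apply/matrixP => i j; rewrite !mxE rmorphM. Qed.

Lemma adjN m p (A : 'M[C]_(m,p)) : adj (- A) = - adj A.
Proof. by apply/matrixP => i j; rewrite !mxE rmorphN. Qed.

Lemma adjB m p (A B : 'M[C]_(m,p)) : adj (A - B) = adj A - adj B.
Proof. by rewrite adjD adjN. Qed.

Lemma adjM m p q (A : 'M[C]_(m,p)) (B : 'M[C]_(p,q)) : adj (A *m B) = adj B *m adj A.
Proof.
apply/matrixP => i j; rewrite !mxE rmorph_sum; apply: eq_bigr => k _.
by rewrite !mxE rmorphM mulrC.
Qed.

Lemma adj1 m : adj (1%:M : 'M[C]_m) = 1%:M.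
Proof. by apply/matrixP => i j; rewrite adjE !mxE eq_sym rmorph_nat. Qed.

Lemma adj0 m p : adj (0 : 'M[C]_(m,p)) = 0.
Proof. by apply/matrixP => i j; rewrite adjE !mxE conjC0. Qed.

Lemma adj_scalar m (c : C) : adj (c%:M : 'M[C]_m) = c^*%:M.
Proof. by apply/matrixP => i j; rewrite adjE !mxE eq_sym; case: (i == j); rewrite ?mulr1n ?mulr0n ?conjC0. Qed.

Lemma conj11 (A : 'M[C]_1) : (A 0 0)^* = adj A 0 0.
Proof. by rewrite adjE. Qed.

Variable n : nat.
Local Notation M := 'M[C]_n.
Local Notation V := 'cV[C]_n.

Definition bf (a : M) (x y : V) : C := (adj x *m a *m y) 0 0.
Definition qf (a : M) (x : V) : C := bf a x x.

Lemma psdE (a : M) : psd a <-> forall x, 0 <= qf a x.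
Proof. by []. Qed.

Lemma bfDl a x y z : bf a (x + y) z = bf a x z + bf a y z.
Proof. by rewrite /bf adjD !mulmxDl mxE. Qed.
Lemma bfDr a x y z : bf a z (x + y) = bf a z x + bf a z y.
Proof. by rewrite /bf !mulmxDr mxE. Qed.
Lemma bfZl a c x y : bf a (c *: x) y = c^* * bf a x y.
Proof. by rewrite /bf adjZ -!scalemxAl mxE. Qed.
Lemma bfZr a c x y : bf a x (c *: y) = c * bf a x y.
Proof. by rewrite /bf -!scalemxAr mxE. Qed.
Lemma bfNl a x y : bf a (- x) y = - bf a x y.
Proof. by rewrite -scaleN1r bfZl rmorphN1 mulN1r. Qed.
Lemma bfNr a x y : bf a x (- y) = - bf a x y.
Proof. by rewrite -scaleN1r bfZr mulN1r. Qed.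
Lemma bfDm a b x y : bf (a + b) x y = bf a x y + bf b x y.
Proof. by rewrite /bf mulmxDr mulmxDl mxE. Qed.
Lemma bfZm c a x y : bf (c *: a) x y = c * bf a x y.
Proof. by rewrite /bf -scalemxAr -scalemxAl mxE. Qed.
Lemma bf_conj a x y : (bf a x y)^* = bf (adj a) y x.
Proof. by rewrite /bf conj11 !adjM adjK mulmxA. Qed.

Definition ev (i : 'I_n) : V := delta_mx i 0.

Lemma bf_ev a i j : bf a (ev i) (ev j) = a i j.
Proof.
rewrite /bf /ev -colE.
have -> : adj (delta_mx i 0 : V) = delta_mx 0 i.
  by apply/matrixP => k l; rewrite adjE !mxE rmorph_nat andbC.
by rewrite -rowE !mxE.
Qed.

Lemma qf_expand a x y (l : C) :
  qf a (x + l *: y) = qf a x + l * bf a x y + l^* * bf a y x + l^* * l * qf a y.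
Proof.
rewrite /qf !bfDl !bfDr !bfZl !bfZr; rewrite mulrA; rewrite !addrA.
by rewrite -(addrA (bf a x x)) (addrC (l * _)) addrA.
Qed.

End Basics.
Arguments ev {K n} i.


Section A2.
Variable K : realType.
Local Notation C := (K[i]).
Variable n : nat.
Lemma psd_herm (a : 'M[C]_n) : psd a -> adj a = a.
Proof.
move=> Ha; apply/matrixP => i j; rewrite adjE.
have r1 : forall l : C, (qf a (ev j + l *: ev i))^* = qf a (ev j + l *: ev i).
  by move=> l; apply: geC0_conj; apply: Ha.
have rj : (a j j)^* = a j j by rewrite -bf_ev; apply: geC0_conj; apply: Ha.
have ri : (a i i)^* = a i i by rewrite -bf_ev; apply: geC0_conj; apply: Ha.
have h1 := r1 1; have h2 := r1 'i.
rewrite !qf_expand /qf !bf_ev in h1 h2.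
rewrite !rmorphD !rmorphM /= !conjCK in h1 h2.
rewrite rj ri in h1 h2.
rewrite conjCi !conjC1 !mul1r ?mulr1 in h1 h2.
set x := (a j i)^* in h1 h2 *; set y := (a i j)^* in h1 h2.
set u := a j i in h1 h2; set w := a i j in h1 h2 *.
set p := a j j in h1 h2; set q := a i i in h1 h2.
have Hc : 'i * 'i = -1 :> C by rewrite -expr2 sqrCi.
have e : 2 * x - 2 * w = ((p + x + y + q) - (p + u + w + q))
   + 'i * ((p + - 'i * x + 'i * y + 'i * - 'i * q) - (p + 'i * u + - 'i * w + - 'i * 'i * q))
   + ('i * 'i + 1) * (x - y + u - w) by ring.
move/eqP: e; rewrite h1 h2 Hc !subrr addNr mul0r mulr0 !addr0 subr_eq0 => /eqP e.
have h20 : (2:C) != 0 by rewrite pnatr_eq0.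
exact: (mulfI h20).
Qed.
Lemma adjvv (w : 'cV[C]_n) : (adj w *m w) 0 0 = \sum_k (w k 0)^* * w k 0.
Proof. by rewrite mxE; apply: eq_bigr => k _; rewrite adjE. Qed.

Lemma adjvv_ge0 (w : 'cV[C]_n) : 0 <= (adj w *m w) 0 0.
Proof. by rewrite adjvv; apply: sumr_ge0 => k _; rewrite mulrC mul_conjC_ge0. Qed.

Lemma adjvv_eq0 (w : 'cV[C]_n) : (adj w *m w) 0 0 = 0 -> w = 0.
Proof.
rewrite adjvv => H; apply/matrixP => k l; rewrite (ord1 l) mxE.
have pos : forall k', true -> 0 <= (w k' 0)^* * w k' 0.
  by move=> k' _; rewrite mulrC mul_conjC_ge0.
have := psumr_eq0P pos H (i := k) isT.
by move/eqP; rewrite mulf_eq0 conjC_eq0 orbb => /eqP.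
Qed.

Lemma psd_ker (a : 'M[C]_n) (x : 'cV[C]_n) : psd a -> qf a x = 0 -> a *m x = 0.
Proof.
move=> Ha Hx; set w := a *m x.
set N : C := (adj w *m w) 0 0.
have bwx : bf a w x = N by rewrite /bf -mulmxA.
have bxw : bf a x w = N.
  rewrite -[bf a x w]conjCK bf_conj (psd_herm Ha) bwx; apply: geC0_conj.
  exact: adjvv_ge0.
set q : C := qf a w.
have q0 : 0 <= q by apply: Ha.
have N0 : 0 <= N by apply: adjvv_ge0.
have D0 : 0 < q + 1 by rewrite ltr_wpDl.
set s : C := N / (q + 1).
have s0 : 0 <= s by rewrite divr_ge0 // ltW.
have H : 0 <= qf a (x + (- s) *: w) := Ha _.
have cs : (- s)^* = - s by rewrite rmorphN /= (geC0_conj s0).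
rewrite qf_expand Hx bwx bxw cs in H.
have E : 0 + - s * N + - s * N + - s * - s * q = - (N ^+ 2 * (q + 2) / (q + 1) ^+ 2).
  have gen : forall N' q' : C, q' + 1 != 0 -> 0 + - (N' / (q' + 1)) * N' + - (N' / (q' + 1)) * N'
     + - (N' / (q' + 1)) * - (N' / (q' + 1)) * q' = - (N' ^+ 2 * (q' + 2) / (q' + 1) ^+ 2).
    by move=> N' q' h; field.
  by apply: gen; rewrite lt0r_neq0.
rewrite E oppr_ge0 in H.
have H2 : 0 <= N ^+ 2 * (q + 2) / (q + 1) ^+ 2.
  apply: divr_ge0; last exact: exprn_ge0 (ltW D0).
  by apply: mulr_ge0; [exact: exprn_ge0 | exact: addr_ge0].
have H3 : N ^+ 2 * (q + 2) / (q + 1) ^+ 2 = 0 by apply/eqP; rewrite eq_le H H2.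
move/eqP: H3; rewrite !mulf_eq0 invr_eq0 !expf_eq0 /= (gt_eqF D0) orbF.
have -> : (q + 2 == 0) = false by apply: gt_eqF; rewrite ltr_wpDl.
rewrite orbF orbb => /eqP N00.
exact: adjvv_eq0.
Qed.
End A2.



Section A3.
Variable K : realType.
Local Notation C := (K[i]).
Variable n : nat.
Local Notation M := 'M[C]_n.
Local Notation V := 'cV[C]_n.

Lemma qf_sum (h : M) (x : V) :
  qf h x = \sum_j \sum_i (x i 0)^* * h i j * x j 0.
Proof.
rewrite /qf /bf mxE; apply: eq_bigr => j _; rewrite mxE mulr_suml.
by apply: eq_bigr => i _; rewrite adjE.
Qed.

Lemma qf1 (x : V) : qf 1%:M x = (adj x *m x) 0 0.
Proof. by rewrite /qf /bf mulmx1. Qed.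

Lemma qf_scalar (r : C) (x : V) : qf r%:M x = r * (adj x *m x) 0 0.
Proof. by rewrite -scalemx1 /qf bfZm -/(qf _ _) qf1. Qed.

Lemma norm_le_N (x : V) k : `|x k 0| ^+ 2 <= (adj x *m x) 0 0.
Proof.
rewrite adjvv (bigD1 k) //= normCK mulrC lerDl.
by apply: sumr_ge0 => i _; rewrite mulrC mul_conjC_ge0.
Qed.

Lemma normM_le_N (x : V) i j : `|x i 0| * `|x j 0| <= (adj x *m x) 0 0.
Proof.
case/orP: (real_leVge (normr_real (x i 0)) (normr_real (x j 0))) => H.
  apply: le_trans (norm_le_N x j); rewrite expr2.
  by apply: ler_wpM2r.
apply: le_trans (norm_le_N x i); rewrite expr2.
by apply: ler_wpM2l.
Qed.

Lemma herm_bound (h : M) : adj h = h -> exists r : C, 0 <= r /\ psd (h + r%:M).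
Proof.
move=> Hh; exists (\sum_j \sum_i `|h i j|); split.
  by apply: sumr_ge0 => j _; apply: sumr_ge0 => i _.
move=> x; rewrite -/(bf _ x x) -/(qf _ x) /qf bfDm -/(qf _ x) -/(qf _ x) qf_scalar.
set N := (adj x *m x) 0 0.
set z := qf h x.
have zr : z \is Num.real by apply/CrealP; rewrite /z /qf bf_conj Hh.
have zle : `|z| <= (\sum_j \sum_i `|h i j|) * N.
  rewrite /z qf_sum; apply: le_trans (ler_norm_sum _ _ _) _.
  rewrite mulr_suml; apply: ler_sum => j _.
  apply: le_trans (ler_norm_sum _ _ _) _.
  rewrite mulr_suml; apply: ler_sum => i _.
  rewrite !normrM norm_conjC mulrAC mulrC.
  by apply: ler_wpM2l => //; apply: normM_le_N.
have := real_lerNnormlW zr zle.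
by rewrite -subr_ge0 opprK addrC.
Qed.


Definition subsp (P : M -> Prop) :=
  [/\ P 1%:M, (forall a b, P a -> P b -> P (a + b)),
      (forall (c : C) a, P a -> P (c *: a)) & (forall a, P a -> P (adj a))].

Definition stateP (P : M -> Prop) (phi : M -> C) : Prop :=
  [/\ (forall a b, P a -> P b -> phi (a + b) = phi a + phi b),
      (forall (c : C) a, P a -> phi (c *: a) = c * phi a),
      (forall a, P a -> psd a -> 0 <= phi a)
    & phi 1%:M = 1].

Lemma subsp0 P : subsp P -> P 0.
Proof. by case=> H1 _ HZ _; rewrite -(scale0r 1%:M); apply: HZ. Qed.

Lemma subspB P a b : subsp P -> P a -> P b -> P (a - b).
Proof. by case=> _ HD HZ _ Ha Hb; rewrite -scaleN1r; apply: HD => //; apply: HZ. Qed.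

Lemma state0 P phi : subsp P -> stateP P phi -> phi 0 = 0.
Proof.
move=> sP [_ HZ _ H1]; rewrite -(scale0r 1%:M) HZ ?mul0r //; by case: sP.
Qed.

Lemma stateB P phi a b : subsp P -> stateP P phi -> P a -> P b ->
  phi (a - b) = phi a - phi b.
Proof.
move=> sP [HD HZ _ _] Ha Hb; rewrite -scaleN1r HD ?HZ ?mulN1r //.
by case: sP => _ _ HZ' _; apply: HZ'.
Qed.

Lemma psdD (a b : M) : psd a -> psd b -> psd (a + b).
Proof.
move=> Ha Hb x; rewrite -[X in 0 <= X]/(qf (a + b) x) /qf bfDm.
exact: addr_ge0 (Ha x) (Hb x).
Qed.

Lemma psdZ (c : C) (a : M) : 0 <= c -> psd a -> psd (c *: a).
Proof.
move=> Hc Ha x; rewrite -[X in 0 <= X]/(qf (c *: a) x) /qf bfZm.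
exact: mulr_ge0 Hc (Ha x).
Qed.

Lemma psd_qf (a : M) x : psd a -> 0 <= qf a x.
Proof. by move=> Ha; apply: Ha. Qed.

Lemma state_real P phi b : subsp P -> stateP P phi -> P b -> adj b = b ->
  phi b \is Num.real.
Proof.
move=> sP sphi Pb Hb; have [r [r0 Hr]] := herm_bound Hb.
case: (sP) => P1 HD HZ _; case: (sphi) => pD pZ pP p1.
have Pr : P r%:M by rewrite -scalemx1; apply: HZ.
have := pP _ (HD _ _ Pb Pr) Hr; rewrite pD // -scalemx1 pZ // p1 mulr1 => H.
have -> : phi b = (phi b + r) - r by rewrite addrK.
by apply: rpredB; apply: ger0_real.
Qed.

End A3.



Section A4.
Variable K : realType.
Local Notation C := (K[i]).
Variable n : nat.
Local Notation M := 'M[C]_n.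

Definition rc (t : K) : C := (t%:C)%C.
Lemma rcD a b : rc (a + b) = rc a + rc b. Proof. by rewrite /rc rmorphD. Qed.
Lemma rcN a : rc (- a) = - rc a. Proof. by rewrite /rc rmorphN. Qed.
Lemma rcM a b : rc (a * b) = rc a * rc b. Proof. by rewrite /rc rmorphM. Qed.
Lemma rc0 : rc 0 = 0. Proof. by rewrite /rc rmorph0. Qed.
Lemma rcle a b : (rc a <= rc b) = (a <= b). Proof. by rewrite /rc lecR. Qed.
Lemma rclt a b : (rc a < rc b) = (a < b). Proof. by rewrite /rc ltcR. Qed.
Lemma rcRe (z : C) : z \is Num.real -> rc (complex.Re z) = z.
Proof. by move=> h; rewrite /rc RRe_real. Qed.

Definition ext (P : M -> Prop) (h : M) : M -> Prop :=
  fun m => exists a c, P a /\ m = a + c *: h.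

Lemma subsp_ext P h : subsp P -> adj h = h -> subsp (ext P h).
Proof.
move=> sP Hh; case: (sP) => P1 HD HZ HA; split.
- by exists 1%:M, 0; split => //; rewrite scale0r addr0.
- move=> _ _ [a [c [Pa ->]]] [b [d [Pb ->]]]; exists (a + b), (c + d); split; first exact: HD.
  by rewrite scalerDl addrACA.
- move=> e _ [a [c [Pa ->]]]; exists (e *: a), (e * c); split; first exact: HZ.
  by rewrite scalerDr scalerA.
- move=> _ [a [c [Pa ->]]]; exists (adj a), c^*; split; first exact: HA.
  by rewrite adjD adjZ Hh.
Qed.

Lemma ext_sub P h a : P a -> ext P h a.
Proof. by move=> Pa; exists a, 0; rewrite scale0r addr0. Qed.

Lemma ext_h P h : subsp P -> ext P h h.
Proof. by move=> sP; exists 0, 1; split; [exact: subsp0 | rewrite scale1r add0r]. Qed.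

Lemma zmod_sub (Z : zmodType) (x y z w : Z) : x + y = z + w -> y - w = z - x.
Proof. by move=> E; rewrite -[y](addKr x) E addrA addrK addrC. Qed.

Lemma krein_step P phi h : subsp P -> stateP P phi -> adj h = h ->
  exists phi', stateP (ext P h) phi' /\ forall a, P a -> phi' a = phi a.
Proof.
move=> sP sphi Hh.
case: (sP) => P1 HD HZ HA; case: (sphi) => pD pZ pP p1.
have [Ph | nPh] := classic (P h).
  exists phi; split => //.
  have toP : forall m, ext P h m -> P m.
    by move=> _ [a [c [Pa ->]]]; apply: HD => //; apply: HZ.
  split => //.
  - by move=> a b /toP Pa /toP Pb; apply: pD.
  - by move=> c a /toP Pa; apply: pZ.
  - by move=> a /toP Pa; apply: pP.
have uniq : forall a a' c c', P a -> P a' -> a + c *: h = a' + c' *: h -> a = a' /\ c = c'.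
  move=> a a' c c' Pa Pa' E.
  have cc : c = c'.
    apply/eqP; apply/negPn/negP => ne; apply: nPh.
    have E2 := zmod_sub E; rewrite -scalerBl in E2.
    have -> : h = (c - c')^-1 *: (a' - a).
      by rewrite -E2 scalerA mulVf ?scale1r // subr_eq0.
    by apply: HZ; apply: subspB.
  by split => //; move: E; rewrite cc => /addIr.
pose S : set K := fun t => exists b, P b /\ psd (b + h) /\ phi b = - rc t.
have Sle : forall t b', S t -> P b' -> psd (b' - h) -> rc t <= phi b'.
  move=> t b' [b [Pb [Hb Eb]]] Pb' Hb'.
  have : psd (b + b').
    have -> : b + b' = (b + h) + (b' - h) by rewrite addrACA subrr addr0.
    exact: psdD.
  by move/(pP _ (HD _ _ Pb Pb')); rewrite pD // Eb addrC subr_ge0.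
have [r [r0 Hr]] := herm_bound Hh.
have [r' [r'0 Hr']] : exists r' : C, 0 <= r' /\ psd (- h + r'%:M).
  by apply: herm_bound; rewrite adjN Hh.
have Pr : forall s : C, P s%:M by move=> s; rewrite -scalemx1; apply: HZ.
have phir : forall s : C, phi s%:M = s by move=> s; rewrite -scalemx1 pZ // p1 mulr1.
have Sne : (S !=set0)%classic.
  exists (- complex.Re r), r%:M; split; first exact: Pr.
  split; first by rewrite addrC.
  by rewrite phir rcN opprK rcRe // ger0_real.
have Sub : has_ubound S.
  exists (complex.Re r'); move=> t0 St.
  rewrite -rcle rcRe ?ger0_real //.
  have := Sle t0 r'%:M St (Pr r'); rewrite phir; apply.
  by rewrite addrC.
pose gam := sup S.
have G1 : forall t, S t -> t <= gam by move=> t St; apply: ub_le_sup.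
have G2 : forall b', P b' -> psd (b' - h) -> phi b' \is Num.real -> rc gam <= phi b'.
  move=> b' Pb' Hb' Rb; rewrite -(rcRe Rb) rcle; apply: ge_sup => // t St.
  by rewrite -rcle rcRe //; apply: Sle.
pose Q m := fun p : M * C => P p.1 /\ m = p.1 + p.2 *: h.
pose pick m := epsilon (inhabits (0, 0)) (Q m).
pose phi' m := phi (pick m).1 + (pick m).2 * rc gam.
have phi'E : forall a c, P a -> phi' (a + c *: h) = phi a + c * rc gam.
  move=> a c Pa.
  have := epsilon_spec (inhabits (0, 0)) (Q (a + c *: h)) (ex_intro _ (a, c) (conj Pa erefl)).
  rewrite -/(pick _); case=> Pp Ep; rewrite /phi'; have [-> ->] := uniq _ _ _ _ Pp Pa (esym Ep).
  by [].
exists phi'; split; last by move=> a Pa; have := phi'E a 0 Pa; rewrite scale0r addr0 mul0r addr0.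
split.
- move=> _ _ [a [c [Pa ->]]] [b [d [Pb ->]]].
  by rewrite addrACA -scalerDl !phi'E ?pD //; [rewrite mulrDl addrACA | apply: HD].
- move=> e _ [a [c [Pa ->]]].
  by rewrite scalerDr scalerA !phi'E ?pZ //; [rewrite mulrDr mulrA | apply: HZ].
- move=> _ [a [c [Pa ->]]] Hm.
  have Hadj := psd_herm Hm.
  rewrite adjD adjZ Hh in Hadj.
  have [Ea Ec] := uniq _ _ _ _ (HA _ Pa) Pa Hadj.
  have cR : c \is Num.real by apply/CrealP.
  rewrite phi'E //.
  rewrite -(rcRe cR) in Hm *.
  move: (complex.Re c) Hm => rr Hm.
  case: (ltgtP rr 0) => [rlt|rgt|E0].
  + have [d [d0 rd]] : exists d, 0 < d /\ rc rr = - d.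
      by exists (- rc rr); rewrite opprK oppr_gt0 -rc0 rclt.
    pose b := d^-1 *: a.
    have Pb : P b by apply: HZ.
    have Hb : psd (b - h).
      have -> : b - h = d^-1 *: (a + rc rr *: h).
        by rewrite rd scalerDr scalerA mulrN mulVf ?gt_eqF // scaleN1r.
      by apply: psdZ => //; rewrite invr_ge0 ltW.
    have Rb : phi b \is Num.real.
      apply: (state_real sP sphi Pb).
      have di : 0 <= d^-1 by rewrite invr_ge0 ltW.
      by rewrite /b adjZ Ea (geC0_conj di).
    have H := G2 _ Pb Hb Rb; rewrite -subr_ge0 in H.
    have Ea' : phi a = d * phi b by rewrite /b pZ // mulrA divff ?gt_eqF // mul1r.
    rewrite Ea' rd mulNr -mulrBr.
    by apply: mulr_ge0 => //; apply: ltW.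
  + have [d [d0 rd]] : exists d, 0 < d /\ rc rr = d.
      by exists (rc rr); rewrite -rc0 rclt.
    rewrite rd in Hm *.
    pose b := d^-1 *: a.
    have Pb : P b by apply: HZ.
    have Hb : psd (b + h).
      have -> : b + h = d^-1 *: (a + d *: h).
        by rewrite scalerDr scalerA mulVf ?gt_eqF // scale1r.
      by apply: psdZ => //; rewrite invr_ge0 ltW.
    have Rb : phi b \is Num.real.
      apply: (state_real sP sphi Pb).
      have di : 0 <= d^-1 by rewrite invr_ge0 ltW.
      by rewrite /b adjZ Ea (geC0_conj di).
    have St : S (- complex.Re (phi b)).
      by exists b; split => //; split => //; rewrite rcN opprK rcRe.
    have := G1 _ St; rewrite -rcle rcN rcRe // -subr_ge0 opprK => H.
    have Ea' : phi a = d * phi b by rewrite /b pZ // mulrA divff ?gt_eqF // mul1r.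
    rewrite Ea' -mulrDr.
    by apply: mulr_ge0; [apply: ltW | rewrite addrC].
  + rewrite E0 rc0 mul0r addr0; rewrite E0 rc0 scale0r addr0 in Hm.
    exact: pP.
- by have := phi'E 1%:M 0 P1; rewrite scale0r addr0 mul0r addr0 p1.
Qed.

End A4.



Section A5.
Variable K : realType.
Local Notation C := (K[i]).
Variable n : nat.
Local Notation M := 'M[C]_n.
Local Notation V := 'cV[C]_n.

Fixpoint extl (P : M -> Prop) (hs : seq M) : M -> Prop :=
  if hs is h :: hs' then ext (extl P hs') h else P.

Definition hermL (hs : seq M) := forall h, h \in hs -> adj h = h.

Lemma hermL_cons h hs : hermL (h :: hs) -> adj h = h /\ hermL hs.
Proof.
move=> H; split; first by apply: H; rewrite inE eqxx.
by move=> h' Hh'; apply: H; rewrite inE Hh' orbT.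
Qed.

Lemma subsp_extl P hs : subsp P -> hermL hs -> subsp (extl P hs).
Proof.
elim: hs => [//|h hs IH] sP /hermL_cons [Hh Hhs] /=.
by apply: subsp_ext => //; apply: IH.
Qed.

Lemma extl_sub P hs a : P a -> extl P hs a.
Proof. by elim: hs => [//|h hs IH] Pa /=; apply: ext_sub; apply: IH. Qed.

Lemma extl_mem P hs h : subsp P -> hermL hs -> h \in hs -> extl P hs h.
Proof.
elim: hs => [//|h0 hs IH] sP /hermL_cons [Hh Hhs]; rewrite inE => /orP [/eqP ->|Hin] /=.
  by apply: ext_h; apply: subsp_extl.
by apply: ext_sub; apply: IH.
Qed.

Lemma krein_list P phi hs : subsp P -> stateP P phi -> hermL hs ->
  exists phi', stateP (extl P hs) phi' /\ forall a, P a -> phi' a = phi a.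
Proof.
elim: hs => [|h hs IH] sP sphi; first by move=> _; exists phi.
move=> /hermL_cons [Hh Hhs].
have [phi1 [s1 e1]] := IH sP sphi Hhs.
have [phi2 [s2 e2]] := krein_step (subsp_extl sP Hhs) s1 Hh.
exists phi2; split => // a Pa; rewrite e2 ?e1 //; exact: extl_sub.
Qed.

Definition H1 (k l : 'I_n) : M := delta_mx k l + delta_mx l k.
Definition H2 (k l : 'I_n) : M := 'i *: delta_mx k l - 'i *: delta_mx l k.

Lemma adj_delta (k l : 'I_n) : adj (delta_mx k l : M) = delta_mx l k.
Proof. by apply/matrixP => i j; rewrite adjE !mxE rmorph_nat andbC. Qed.

Lemma H1_herm k l : adj (H1 k l) = H1 k l.
Proof. by rewrite /H1 adjD !adj_delta addrC. Qed.

Lemma H2_herm k l : adj (H2 k l) = H2 k l.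
Proof.
rewrite /H2 adjB !adjZ !adj_delta conjCi.
by rewrite !scaleNr opprK addrC.
Qed.

Lemma delta_H k l : (delta_mx k l : M) = 2^-1 *: (H1 k l + (- 'i) *: H2 k l).
Proof.
rewrite /H1 /H2 scalerBr !scalerA mulNr -expr2 sqrCi opprK !scale1r.
rewrite addrACA subrr addr0 -mulr2n -scalerMnr scalerMnl -[(2^-1 : C) *+ 2]mulr_natr.
by rewrite mulVf ?scale1r // pnatr_eq0.
Qed.

Definition hsAll : seq M :=
  [seq H1 p.1 p.2 | p <- enum {: 'I_n * 'I_n}] ++ [seq H2 p.1 p.2 | p <- enum {: 'I_n * 'I_n}].

Lemma hsAll_herm : hermL hsAll.
Proof.
move=> h; rewrite mem_cat => /orP [] /mapP [p _ ->]; [exact: H1_herm | exact: H2_herm].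
Qed.

Lemma extl_all P a : subsp P -> extl P hsAll a.
Proof.
move=> sP; have sQ := subsp_extl sP hsAll_herm.
case: (sQ) => Q1 QD QZ QA.
have Q0 := subsp0 sQ.
rewrite [a]matrix_sum_delta.
apply: (big_ind (extl P hsAll)) => // k _.
apply: (big_ind (extl P hsAll)) => // l _.
apply: (QZ); rewrite delta_H; apply: (QZ); apply: (QD).
  apply: extl_mem => //; first exact: hsAll_herm.
  by rewrite mem_cat (map_f (fun p : 'I_n * 'I_n => H1 p.1 p.2) (mem_enum _ (k, l))).
apply: (QZ); apply: extl_mem => //; first exact: hsAll_herm.
by rewrite mem_cat (map_f (fun p : 'I_n * 'I_n => H2 p.1 p.2) (mem_enum _ (k, l))) orbT.
Qed.

Lemma outer_psd (x : V) : psd (x *m adj x).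
Proof.
move=> y; rewrite -[X in 0 <= X]/(qf _ y) /qf /bf.
rewrite !mulmxA -(mulmxA (adj y *m x)).
rewrite [(_ *m _) 0 0]mxE big_ord1.
have -> : (adj x *m y) 0 0 = ((adj y *m x) 0 0)^* by rewrite conj11 adjM adjK.
exact: mul_conjC_ge0.
Qed.

Lemma outerE (x : V) k l : (x *m adj x) k l = x k 0 * (x l 0)^*.
Proof. by rewrite mxE big_ord1 adjE. Qed.

Lemma rep_full Q w : subsp Q -> (forall a, Q a) -> stateP Q w ->
  exists rho : M, [/\ psd rho, \tr rho = 1 & forall a, w a = \tr (rho *m a)].
Proof.
move=> sQ Qall sw; have w0 := state0 sQ sw; case: sw => pD pZ pP p1.
have wsum : forall a, w a = \sum_k \sum_l a k l * w (delta_mx k l).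
  move=> a; rewrite {1}[a]matrix_sum_delta.
  have Hm : {morph w : x y / x + y} by move=> x y; apply: pD.
  rewrite (big_morph w Hm w0); apply: eq_bigr => k _.
  rewrite (big_morph w Hm w0); apply: eq_bigr => l _.
  exact: pZ.
pose rho : M := \matrix_(l, k) w (delta_mx k l).
have trE : forall a, \tr (rho *m a) = w a.
  move=> a; rewrite wsum exchange_big /mxtrace; apply: eq_bigr => l _.
  by rewrite mxE; apply: eq_bigr => k _; rewrite mxE mulrC.
exists rho; split.
- move=> x; rewrite -[X in 0 <= X]/(qf rho x) qf_sum.
  have := pP _ (Qall _) (outer_psd x); rewrite wsum.
  congr (0 <= _); apply: eq_bigr => j _; apply: eq_bigr => i _.
  by rewrite outerE mxE; ring.
- by rewrite -[rho]mulmx1 trE.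
- by move=> a; rewrite trE.
Qed.

Theorem krein P phi : subsp P -> stateP P phi ->
  exists rho : M, [/\ psd rho, \tr rho = 1 & forall a, P a -> phi a = \tr (rho *m a)].
Proof.
move=> sP sphi.
have [w [sw ew]] := krein_list sP sphi hsAll_herm.
have [rho [H1 H2 H3]] := rep_full (subsp_extl sP hsAll_herm) (fun a => extl_all a sP) sw.
by exists rho; split => // a Pa; rewrite -ew // H3.
Qed.

End A5.



Section A6.
Variable K : realType.
Local Notation C := (K[i]).
Variable n : nat.
Local Notation M := 'M[C]_n.
Local Notation V := 'cV[C]_n.

Definition colv (v : 'I_n -> C) : V := \col_i v i.

Lemma PvE v : Pv v = colv v *m adj (colv v).
Proof. by apply/matrixP => i j; rewrite outerE !mxE. Qed.

Lemma tr_outer (rho : M) (x : V) : \tr (rho *m (x *m adj x)) = qf rho x.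
Proof. by rewrite mulmxA mxtrace_mulC /qf /bf mulmxA /mxtrace big_ord1. Qed.

Lemma trPv v a : \tr (Pv v *m a) = qf a (colv v).
Proof. by rewrite PvE mxtrace_mulC tr_outer. Qed.

Lemma qf_outer (x y : V) : qf (x *m adj x) y = ((adj y *m x) 0 0) * ((adj y *m x) 0 0)^*.
Proof.
rewrite /qf /bf !mulmxA -(mulmxA (adj y *m x)).
rewrite [(_ *m _) 0 0]mxE big_ord1.
by rewrite conj11 adjM adjK.
Qed.

Lemma adj_ev (y : V) i : (adj y *m ev i) 0 0 = (y i 0)^*.
Proof. by rewrite /ev -colE !mxE. Qed.

Lemma mul_ev (A : M) l i : (A *m ev i) l 0 = A l i.
Proof. by rewrite /ev -colE mxE. Qed.

Lemma adj_ev_mx i : adj (ev i : V) = delta_mx 0 i.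
Proof. by apply/matrixP => k l; rewrite adjE !mxE rmorph_nat andbC. Qed.

Lemma qf_delta (x : V) i j : qf (delta_mx i j) x = (x i 0)^* * x j 0.
Proof.
have -> : (delta_mx i j : M) = ev i *m adj (ev j) by rewrite adj_ev_mx /ev mul_delta_mx.
rewrite /qf /bf !mulmxA -(mulmxA (adj x *m ev i)).
rewrite [(_ *m _) 0 0]mxE big_ord1 adj_ev.
by rewrite -[(adj (ev j) *m x) 0 0]conjCK conj11 adjM adjK adj_ev conjCK.
Qed.

Lemma unitE v : unit_vec v <-> qf 1%:M (colv v) = 1.
Proof.
rewrite qf1 adjvv /unit_vec.
have -> : \sum_k (colv v k 0)^* * colv v k 0 = \sum_i v i * (v i)^*.
  by apply: eq_bigr => i _; rewrite !mxE mulrC.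
by [].
Qed.

Lemma inARP (R : rel 'I_n) (a : M) : in_AR R a <-> forall i j, ~~ R i j -> a i j = 0.
Proof.
split.
  by move=> [b ->] i j Hij; rewrite mxE (negbTE Hij).
move=> H; exists a; apply/matrixP => i j; rewrite mxE.
by case: (boolP (R i j)) => // /H ->.
Qed.

Lemma subsp_AR (R : rel 'I_n) : tolerance R -> subsp (@in_AR K n R).
Proof.
move=> [Rr Rs]; split.
- apply/inARP => i j Hij; rewrite mxE.
  by case: eqP Hij => [->|]; rewrite ?Rr // mulr0n.
- move=> a b /inARP Ha /inARP Hb; apply/inARP => i j Hij.
  by rewrite mxE Ha ?Hb ?addr0.
- move=> c a /inARP Ha; apply/inARP => i j Hij.
  by rewrite mxE Ha ?mulr0.
- move=> a /inARP Ha; apply/inARP => i j Hij.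
  by rewrite adjE Ha ?conjC0 // Rs.
Qed.

Lemma trT (R : rel 'I_n) (b a : M) : tolerance R -> in_AR R a ->
  \tr (Tmap R b *m a) = \tr (b *m a).
Proof.
move=> [Rr Rs] /inARP Ha; rewrite /mxtrace; apply: eq_bigr => l _.
rewrite !mxE; apply: eq_bigr => k _; rewrite !mxE.
case: (boolP (R l k)) => // Hlk.
by rewrite Ha ?mul0r ?mulr0 // Rs.
Qed.

Lemma vstate P (X : V) : qf 1%:M X = 1 -> stateP P (fun a => qf a X).
Proof.
move=> H1; split => //.
- by move=> a b _ _; rewrite /qf bfDm.
- by move=> c a _; rewrite /qf bfZm.
- by move=> a _ Ha; apply: Ha.
Qed.

Lemma connect_prop (T : finType) (e : rel T) (a : pred T) x y :
  (forall u w, e u w -> a u -> a w) -> a x -> connect e x y -> a y.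
Proof.
move=> H ax /connectP [p ep ->]; elim: p x ax ep => //= z p IH x ax /andP [exz ep].
exact: IH (H _ _ exz ax) ep.
Qed.

End A6.



Section A7.
Variable K : realType.
Local Notation C := (K[i]).
Variable n : nat.
Local Notation M := 'M[C]_n.
Local Notation V := 'cV[C]_n.

Lemma outer_AR (R : rel 'I_n) (x : V) :
  (forall k l, x k 0 != 0 -> x l 0 != 0 -> R k l) -> @in_AR K n R (x *m adj x).
Proof.
move=> H; apply/inARP => k l Hkl; rewrite outerE.
case: (eqVneq (x k 0) 0) => [->|xk]; first by rewrite mul0r.
case: (eqVneq (x l 0) 0) => [->|xl]; first by rewrite conjC0 mulr0.
by move: Hkl; rewrite H.
Qed.

Lemma bf_evl (a : M) l (x : V) : bf a (ev l) x = (a *m x) l 0.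
Proof. by rewrite /bf adj_ev_mx -mulmxA -rowE mxE. Qed.

Lemma bfI (y z : V) : (adj y *m z) 0 0 = bf 1%:M y z.
Proof. by rewrite /bf mulmx1. Qed.

Lemma rho_unique (R : rel 'I_n) (v : 'I_n -> C) (rho : M) :
  tolerance R -> unit_vec v -> R_tolerant R v -> psd rho -> \tr rho = 1 ->
  (forall a, in_AR R a -> psd a -> qf a (colv v) = 0 -> \tr (rho *m a) = 0) ->
  rho = Pv v.
Proof.
move=> [Rr Rs] Hu [[m vm] Hconn] Hrho Htr Hyp.
set X := colv v.
have Xe : forall i, X i 0 = v i by move=> i; rewrite !mxE.
have key : forall x : V, in_AR R (x *m adj x) -> (adj X *m x) 0 0 = 0 -> rho *m x = 0.
  move=> x Ax H0; apply: psd_ker Hrho _; rewrite -tr_outer; apply: Hyp => //.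
    exact: outer_psd.
  by rewrite qf_outer H0 mul0r.
have c0 : forall i, v i = 0 -> forall l, rho l i = 0.
  move=> i vi l; rewrite -mul_ev key; first by rewrite mxE.
    have supp : forall k, (k == i)%:R != 0 :> C -> k = i.
      by move=> k; case: (eqVneq k i) => // ki /=; rewrite eqxx.
    apply: outer_AR => k l'; rewrite !mxE !eqxx !andbT.
    by move=> /supp -> /supp ->; apply: Rr.
  by rewrite adj_ev Xe vi conjC0.
have edge : forall i j, R i j -> v i != 0 -> v j != 0 ->
    forall l, (v j)^* * rho l i = (v i)^* * rho l j.
  move=> i j Rij vi vj l.
  pose x : V := (v j)^* *: ev i - (v i)^* *: ev j.
  have Hx : rho *m x = 0.
    apply: key.
      have sup : forall k, x k 0 != 0 -> (k == i) || (k == j).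
        move=> k; rewrite /x !mxE !eqxx !andbT.
        by case: (k == i); case: (k == j); rewrite ?mulr0n ?mulr1n ?mulr0 ?subrr ?eqxx.
      apply: outer_AR => k l' /sup /orP [] /eqP -> /sup /orP [] /eqP ->;
        by rewrite ?Rr ?Rij // Rs.
    by rewrite bfI /x bfDr bfNr !bfZr -!bfI !adj_ev !Xe mulrC subrr.
  have := congr1 (fun A : V => A l 0) Hx.
  by rewrite -bf_evl /x bfDr bfNr !bfZr !bf_ev mxE => /eqP; rewrite subr_eq0 => /eqP.
have herm := psd_herm Hrho.
have hE : forall l j, rho l j = (rho j l)^* by move=> l j; rewrite -{1}herm adjE.
have rmm : (rho m m)^* = rho m m.
  by apply: geC0_conj; rewrite -bf_ev; apply: Hrho.
pose good j := [forall l, (v m)^* * rho l j == (v j)^* * rho l m].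
have goodm : good m by apply/forallP => l; rewrite eqxx.
have prop : forall u w, Rv R v u w -> good u -> good w.
  move=> u w /and3P [Ruw vu vw] /forallP gu; apply/forallP => l; apply/eqP.
  have e1 := edge u w Ruw vu vw l.
  have e2 := eqP (gu l).
  have cu : (v u)^* != 0 by rewrite conjC_eq0.
  apply: (mulfI cu); rewrite [LHS]mulrCA -e1 [LHS]mulrCA e2 [LHS]mulrCA.
  by [].
have G : forall l j, (v m)^* * rho l j = (v j)^* * rho l m.
  move=> l j; case: (eqVneq (v j) 0) => [vj0|vj].
    by rewrite (c0 j vj0) vj0 conjC0 !mul0r mulr0.
  have := connect_prop prop goodm (Hconn m j vm vj).
  by move/forallP/(_ l)/eqP.
have A1 : forall l, v m * rho l m = v l * rho m m.
  move=> l; have := congr1 Num.conj (G m l).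
  by rewrite !rmorphM /= !conjCK rmm -hE.
have B : forall l j, v m * (v m)^* * rho l j = v l * (v j)^* * rho m m.
  by move=> l j; rewrite -mulrA G mulrCA A1; ring.
have tr1 : v m * (v m)^* = rho m m.
  have := congr1 (fun z => v m * (v m)^* * z) Htr; rewrite mulr1 /= => <-.
  rewrite /mxtrace mulr_sumr (eq_bigr (fun l => v l * (v l)^* * rho m m)); last first.
    by move=> l _; rewrite B.
  by rewrite -mulr_suml Hu mul1r.
have nz : v m * (v m)^* != 0 by rewrite mulf_eq0 conjC_eq0 negb_or vm.
apply/matrixP => l j; rewrite [RHS]mxE.
by apply: (mulfI nz); rewrite B -tr1; ring.
Qed.

End A7.



Section A8.
Variable K : realType.
Local Notation C := (K[i]).
Variable n : nat.
Local Notation M := 'M[C]_n.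
Local Notation V := 'cV[C]_n.

Lemma psd_diag (rho : M) j : psd rho -> 0 <= rho j j.
Proof. by move=> H; rewrite -bf_ev; apply: H. Qed.

Lemma psd_col0 (rho : M) j : psd rho -> rho j j = 0 -> forall l, rho l j = 0.
Proof.
move=> H Hj l; rewrite -mul_ev psd_ker ?mxE //.
by rewrite /qf bf_ev.
Qed.

Lemma zero_diag (rho : M) : psd rho -> (forall j, rho j j = 0) -> rho = 0.
Proof.
move=> H Hd; apply/matrixP => l j; rewrite [RHS]mxE; exact: psd_col0.
Qed.

Lemma qfB (a b : M) x : qf (a - b) x = qf a x - qf b x.
Proof. by rewrite /qf bfDm -scaleN1r bfZm mulN1r. Qed.

Lemma subE (A B : M) i j : (A - B) i j = A i j - B i j.
Proof. by rewrite !mxE. Qed.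

Lemma schur (rho : M) m : psd rho -> rho m m != 0 ->
  exists y : V, [/\ psd (rho - y *m adj y),
     (rho - y *m adj y) m m = 0 &
     forall j, rho j j = 0 -> (rho - y *m adj y) j j = 0].
Proof.
move=> Hr pm.
have herm := psd_herm Hr.
have hE : forall l j, rho l j = (rho j l)^* by move=> l j; rewrite -{1}herm adjE.
set p := rho m m.
have p0 : 0 < p by rewrite lt0r pm psd_diag.
have pc : p^* = p by apply: geC0_conj; apply: ltW.
set sq := sqrtC p.
have sqK : sq ^+ 2 = p by apply: sqrtCK.
have sq0 : 0 < sq by rewrite sqrtC_gt0.
have sqc : sq^* = sq by apply: geC0_conj; apply: ltW.
have sqn : sq != 0 by apply: lt0r_neq0.
pose y : V := sq^-1 *: (rho *m ev m).
have yE : forall l, y l 0 = sq^-1 * rho l m by move=> l; rewrite /y mxE mul_ev.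
have r1E : forall l j, (y *m adj y) l j = rho l m * (rho j m)^* / p.
  move=> l j; rewrite outerE !yE rmorphM fmorphV /= sqc -sqK; field; exact: sqn.
exists y; split.
- move=> x; rewrite -[X in 0 <= X]/(qf _ x) qfB.
  set beta := bf rho x (ev m).
  have q1 : qf (y *m adj y) x = beta * beta^* / p.
    rewrite qf_outer.
    have -> : (adj x *m y) 0 0 = sq^-1 * beta.
      by rewrite /y -scalemxAr mxE /beta /bf mulmxA.
    rewrite rmorphM fmorphV /= sqc -sqK; field; exact: sqn.
  have bm : bf rho (ev m) x = beta^* by rewrite /beta bf_conj herm.
  have H : 0 <= qf rho (x + (- (beta^* / p)) *: ev m) := Hr _.
  have e3 : qf rho (ev m) = p by rewrite /qf bf_ev.
  have cl : (- (beta^* / p))^* = - (beta / p).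
    by rewrite rmorphN rmorphM fmorphV /= conjCK pc.
  rewrite qf_expand bm e3 -/beta cl in H.
  rewrite q1.
  suff <- : qf rho x + - (beta^* / p) * beta + - (beta / p) * beta^* + - (beta / p) * - (beta^* / p) * p
     = qf rho x - beta * beta^* / p by [].
  field; exact: lt0r_neq0.
- rewrite subE r1E; rewrite -/p pc; field; exact: lt0r_neq0.
- move=> j Hj; rewrite subE r1E Hj.
  have -> : rho j m = 0 by rewrite hE psd_col0 ?conjC0.
  by rewrite conjC0 mulr0 mul0r subrr.
Qed.

Lemma decomp (rho : M) : psd rho -> exists ys : seq V, rho = \sum_(y <- ys) y *m adj y.
Proof.
move=> Hr; have := leqnn #|[pred j | rho j j != 0]|.
move: {2}#|_| => k; elim: k rho Hr => [|k IH] rho Hr Hk.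
  exists [::]; rewrite big_nil; apply: zero_diag => // j; apply/eqP; apply/negPn/negP => nz.
  by move: Hk; rewrite leqn0 => /eqP/card0_eq/(_ j); rewrite !inE nz.
case: (pickP [pred j | rho j j != 0]) => [m /= pm | none].
  have [y [Hp Hm Hz]] := schur Hr pm.
  have Hk' : leq #|[pred j | (rho - y *m adj y) j j != 0]| k.
    rewrite -ltnS; apply: leq_trans Hk; apply: proper_card; apply/properP; split.
      by apply/fintype.subsetP => j; rewrite !inE; apply: contra => /eqP Hj; rewrite Hz.
    by exists m; rewrite !inE ?pm // Hm eqxx.
  have [ys Hys] := IH _ Hp Hk'.
  by exists (y :: ys); rewrite big_cons -Hys addrC subrK.
exists [::]; rewrite big_nil; apply: zero_diag => // j.
by have := none j; rewrite /= => /negbFE /eqP.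
Qed.

End A8.



Section A9.
Variable K : realType.
Local Notation C := (K[i]).
Variable n : nat.
Local Notation M := 'M[C]_n.
Local Notation V := 'cV[C]_n.

Lemma vstate_div P (X : V) (tau : C) : qf 1%:M X = tau -> 0 < tau ->
  stateP P (fun a => qf a X / tau).
Proof.
move=> Ht t0; split.
- by move=> a b _ _; rewrite /qf bfDm mulrDl.
- by move=> c a _; rewrite /qf bfZm mulrA.
- by move=> a _ Ha; apply: divr_ge0; [apply: Ha | apply: ltW].
- by rewrite Ht divff // lt0r_neq0.
Qed.

Lemma delta_AR (R : rel 'I_n) k l : R k l -> @in_AR K n R (delta_mx k l).
Proof.
move=> Rkl; apply/inARP => i j Hij; rewrite mxE.
by case: eqP Hij => [->|]; case: eqP => [->|] //; rewrite ?Rkl ?andbF.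
Qed.

Lemma pure_ext (R : rel 'I_n) (phi psi : M -> C) : tolerance R ->
  (forall a, in_AR R a -> phi a = psi a) -> pure_stateA R phi -> pure_stateA R psi.
Proof.
move=> tR E [[pD pZ pP p1] Hx]; have sA := @subsp_AR K n R tR; case: (sA) => A1 AD AZ AA.
split; first split.
- move=> a b Aa Ab; rewrite -(E (a + b)); last exact: AD.
  rewrite -(E a) // -(E b) //; exact: pD.
- move=> c a Aa; rewrite -(E (c *: a)); last exact: AZ.
  rewrite -(E a) //; exact: pZ.
- move=> a Aa Ha; rewrite -(E a) //; exact: pP.
- by rewrite -(E 1%:M).
- move=> t f1 f2 Ht s1 s2 Hc a Aa; rewrite -(E a) //; apply: (Hx t) => // b Ab.
  by rewrite E //; exact: Hc.
Qed.

Lemma trTq (R : rel 'I_n) v (a : M) : tolerance R -> in_AR R a ->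
  \tr (Tmap R (Pv v) *m a) = qf a (colv v).
Proof. by move=> tR Aa; rewrite trT // trPv. Qed.

Lemma vanish_rep (R : rel 'I_n) (v : 'I_n -> C) (psi : M -> C) :
  tolerance R -> unit_vec v -> R_tolerant R v -> stateA R psi ->
  (forall a, in_AR R a -> psd a -> qf a (colv v) = 0 -> psi a = 0) ->
  forall a, in_AR R a -> psi a = qf a (colv v).
Proof.
move=> tR Hu Ht spsi Hv.
have [rho [Hr Htr Hrep]] := krein (@subsp_AR K n R tR) spsi.
have E : rho = Pv v.
  apply: (rho_unique tR Hu Ht Hr Htr) => a Aa Ha H0.
  by rewrite -Hrep // Hv.
by move=> a Aa; rewrite Hrep // E trPv.
Qed.

Lemma tol_pure (R : rel 'I_n) (v : 'I_n -> C) :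
  tolerance R -> unit_vec v -> R_tolerant R v ->
  pure_stateA R (fun a => qf a (colv v)).
Proof.
move=> tR Hu Ht; have Hu' := Hu; move/unitE: Hu' => Hu'.
split; first exact: vstate.
move=> t f1 f2 /andP [t0 t1] s1 s2 Hc.
have conv : forall (f g : M -> C) (s : C), 0 < s -> s < 1 -> stateA R f -> stateA R g ->
    (forall a, in_AR R a -> qf a (colv v) = s * f a + (1 - s) * g a) ->
    forall a, in_AR R a -> f a = qf a (colv v).
  move=> f g s s0 s1' sf sg Hfg.
  apply: (vanish_rep tR Hu Ht sf) => a Aa Ha H0.
  case: sf => _ _ fP _; case: sg => _ _ gP _.
  have F0 : 0 <= s * f a by apply: mulr_ge0; [apply: ltW | apply: fP].
  have G0 : 0 <= (1 - s) * g a by apply: mulr_ge0; [rewrite subr_ge0 ltW | apply: gP].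
  move: (Hfg a Aa); rewrite H0 => /esym/eqP; rewrite paddr_eq0 // => /andP [/eqP].
  by move/eqP; rewrite mulf_eq0 (gt_eqF s0) /= => /eqP.
move=> a Aa; split.
  by apply: (conv f1 f2 t).
apply: (conv f2 f1 (1 - t)) => //.
- by rewrite subr_gt0.
- by rewrite ltrBlDr ltrDl.
- by move=> b Ab; rewrite Hc //; ring.
Qed.

End A9.



Section A10.
Variable K : realType.
Local Notation C := (K[i]).
Variable n : nat.
Local Notation M := 'M[C]_n.
Local Notation V := 'cV[C]_n.

Lemma qf1_ge0 (X : V) : 0 <= qf 1%:M X.
Proof. by rewrite qf1 adjvv_ge0. Qed.

Lemma pure_tol (R : rel 'I_n) (v : 'I_n -> C) :
  tolerance R -> unit_vec v -> pure_stateA R (fun a => qf a (colv v)) -> R_tolerant R v.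
Proof.
move=> tR Hu [sphi Hx]; have Hu' := Hu; move/unitE: Hu' => Hu'.
case: (tR) => Rr Rs; have sA := @subsp_AR K n R tR; case: (sA) => A1 _ _ _.
have nz : exists i, v i != 0.
  case: (pickP (fun i => v i != 0)) => [i vi | none]; first by exists i.
  have : \sum_i v i * (v i)^* = 0.
    by apply: big1 => k _; have := none k; rewrite /= => /negbFE /eqP ->; rewrite mul0r.
  by move: Hu; rewrite /unit_vec => -> /eqP; rewrite oner_eq0.
split => // i j vi vj.
apply/negPn/negP => nc.
pose S k := connect (Rv R v) i k.
pose X := colv v.
pose X1 : V := \col_k (if S k then v k else 0).
pose X2 : V := \col_k (if S k then 0 else v k).
have cross : forall (a : M) k l, in_AR R a -> S k != S l -> (v k)^* * a k l * v l = 0.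
  move=> a k l /inARP Ha Hkl.
  case: (eqVneq (v k) 0) => [->|vk]; first by rewrite conjC0 !mul0r.
  case: (eqVneq (v l) 0) => [->|vl]; first by rewrite mulr0.
  case: (boolP (R k l)) => Rkl; last by rewrite Ha // mulr0 mul0r.
  exfalso; move: Hkl; case Sk: (S k); case Sl: (S l) => //= _.
    have : S l.
      apply: connect_trans (connect1 _); first exact: Sk.
      by apply/and3P; split.
    by rewrite Sl.
  have : S k.
    apply: connect_trans (connect1 _); first exact: Sl.
    by apply/and3P; split => //; rewrite Rs.
  by rewrite Sk.
have split_ : forall a, in_AR R a -> qf a X = qf a X1 + qf a X2.
  move=> a Aa; rewrite !qf_sum -big_split; apply: eq_bigr => l _.
  rewrite -big_split; apply: eq_bigr => k _ /=; rewrite !mxE.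
  case Sk: (S k); case Sl: (S l); rewrite ?conjC0 ?mul0r ?mulr0 ?addr0 ?add0r //;
    by apply: cross => //; rewrite Sk Sl.
have tsum : qf 1%:M X1 + qf 1%:M X2 = 1 by rewrite -split_.
have Si : S i by apply: connect0.
have Sj : S j = false by apply/negbTE.
have pos : forall (Y : V) k, Y k 0 != 0 -> 0 < qf 1%:M Y.
  move=> Y k Yk; rewrite qf1; apply: lt_le_trans (norm_le_N Y k).
  by rewrite exprn_gt0 // normr_gt0.
have t1 : 0 < qf 1%:M X1 by apply: (pos _ i); rewrite mxE Si.
have t2 : 0 < qf 1%:M X2 by apply: (pos _ j); rewrite mxE Sj.
have s1 := vstate_div (@in_AR K n R) (erefl _) t1.
have s2 := vstate_div (@in_AR K n R) (erefl _) t2.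
have := Hx (qf 1%:M X1) _ _ _ s1 s2 _ (delta_mx j j) (@delta_AR K n R _ _ (Rr j)).
case.
- by rewrite t1 /= -[X in _ < X]tsum ltrDl.
- have e : 1 - qf 1%:M X1 = qf 1%:M X2.
    by apply/eqP; rewrite subr_eq (addrC (qf 1%:M X2)) tsum.
  move=> a Aa; rewrite split_ // e.
  by rewrite mulrC divfK ?lt0r_neq0 // [_ * (qf a X2 / _)]mulrC divfK ?lt0r_neq0.
move=> E _; move: E; rewrite !qf_delta !mxE Sj conjC0 mul0r mul0r.
move/eqP; rewrite eq_sym mulf_eq0 conjC_eq0 orbb.
by rewrite (negbTE vj).
Qed.

End A10.



Section A11.
Variable K : realType.
Local Notation C := (K[i]).
Variable n : nat.
Local Notation M := 'M[C]_n.
Local Notation V := 'cV[C]_n.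

Lemma qf0 (a : M) : qf a 0 = 0.
Proof. by rewrite /qf /bf adj0 !mul0mx mxE. Qed.

Lemma qf1_eq0 (Y : V) : qf 1%:M Y = 0 -> Y = 0.
Proof. by rewrite qf1 => /adjvv_eq0. Qed.

Lemma qf_scale (a : M) (Y : V) (tau : C) : 0 < tau ->
  qf a ((sqrtC tau)^-1 *: Y) = qf a Y / tau.
Proof.
move=> t0; set sq := sqrtC tau.
have sqK : sq ^+ 2 = tau by apply: sqrtCK.
have sq0 : 0 < sq by rewrite sqrtC_gt0.
have sqc : sq^* = sq by apply: geC0_conj; apply: ltW.
rewrite /qf bfZl bfZr fmorphV /= sqc -sqK; field; exact: lt0r_neq0.
Qed.

Lemma pure_vec (R : rel 'I_n) (phi : M -> C) : tolerance R -> pure_stateA R phi ->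
  exists X : V, qf 1%:M X = 1 /\ forall a, in_AR R a -> phi a = qf a X.
Proof.
move=> tR [sphi Hx]; have sA := @subsp_AR K n R tR.
have [rho [Hr Htr Hrep]] := krein sA sphi.
have [ys Hys] := decomp Hr.
have rep : forall a, in_AR R a -> phi a = \sum_(y <- ys) qf a y.
  move=> a Aa; rewrite Hrep // Hys mulmx_suml raddf_sum; apply: eq_bigr => y _ /=.
  by rewrite mxtrace_mulC tr_outer.
have trs : \sum_(y <- ys) qf 1%:M y = 1.
  by rewrite -rep; [case: sphi | case: sA].
clear Hys Hrep.
elim: ys rep trs => [|y ys IH] rep trs.
  by move: trs; rewrite big_nil => /eqP; rewrite eq_sym oner_eq0.
rewrite big_cons in trs.
have t0 : 0 <= qf 1%:M y := qf1_ge0 y.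
have s0 : 0 <= \sum_(y' <- ys) qf 1%:M y' by apply: sumr_ge0 => y' _; apply: qf1_ge0.
case: (eqVneq (\sum_(y' <- ys) qf 1%:M y') 0) => [s00 | sn0].
  have z : forall a, \sum_(y' <- ys) qf a y' = 0.
    move=> a; apply: big1_seq => y' /andP [_ Hy'].
    move/eqP: s00; rewrite psumr_eq0; last by move=> y'' _; apply: qf1_ge0.
    move/allP/(_ y' Hy') => /= /eqP /qf1_eq0 ->; exact: qf0.
  exists y; split; first by move: trs; rewrite s00 addr0.
  by move=> a Aa; rewrite rep // big_cons z addr0.
case: (eqVneq (qf 1%:M y) 0) => [t00 | tn0].
  have y0 : y = 0 by apply: qf1_eq0.
  apply: IH.
    by move=> a Aa; rewrite rep // big_cons y0 qf0 add0r.
  by move: trs; rewrite t00 add0r.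
set tau := qf 1%:M y in trs t0 tn0.
set s := \sum_(y' <- ys) qf 1%:M y' in trs s0 sn0.
have tp : 0 < tau by rewrite lt0r tn0.
have sp : 0 < s by rewrite lt0r sn0.
have s1 := vstate_div (@in_AR K n R) (erefl _ : qf 1%:M y = tau) tp.
have s2 : stateP (@in_AR K n R) (fun a => (\sum_(y' <- ys) qf a y') / s).
  split.
  - by move=> a b _ _; rewrite -mulrDl -big_split; congr (_ / _); apply: eq_bigr => y' _; rewrite /qf bfDm.
  - move=> c a _; rewrite mulrA mulr_sumr; congr (_ / _); apply: eq_bigr => y' _.
    by rewrite /qf bfZm.
  - move=> a _ Ha; apply: divr_ge0; last exact: ltW.
    by apply: sumr_ge0 => y' _; apply: psd_qf.
  - by rewrite divff // lt0r_neq0.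
have e : 1 - tau = s by apply/eqP; rewrite subr_eq (addrC s) trs.
have Ht : 0 < tau < 1 by rewrite tp /= -subr_gt0 e.
have Hd : forall a, in_AR R a -> phi a = tau * (qf a y / tau) + (1 - tau) * ((\sum_(y' <- ys) qf a y') / s).
  move=> a Aa; rewrite rep // big_cons e.
  by rewrite mulrC divfK ?lt0r_neq0 // [s * _]mulrC divfK ?lt0r_neq0.
have H := Hx tau _ _ Ht s1 s2 Hd.
exists ((sqrtC tau)^-1 *: y); split.
  by rewrite qf_scale // divff // lt0r_neq0.
by move=> a Aa; rewrite qf_scale //; case: (H a Aa).
Qed.

End A11.



Lemma tol_full (K : realType) (n : nat) (R : rel 'I_n) (v : 'I_n -> K[i]) :
  R_tolerant R v -> R_tolerant (@full_rel n) v.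
Proof.
move=> [nz Hc]; split => // i j vi vj.
apply: (connect_prop (e := Rv R v) (a := connect (Rv (@full_rel n) v) i)) (Hc i j vi vj) => //.
move=> u w /and3P [_ vu vw] Hu; apply: connect_trans Hu (connect1 _).
by apply/and3P; split.
Qed.

Lemma full_tol n : tolerance (@full_rel n).
Proof. by split. Qed.

Theorem proposition4p11 (K : realType) (n : nat) (R : rel 'I_n)
    (HR : tolerance R) :
  (forall v : 'I_n -> K[i], unit_vec v ->
     (pure_stateA R (fun a => \tr (Tmap R (Pv v) *m a)) <-> R_tolerant R v))
  /\ (* F maps R-tolerant pure states of M_n into pure states of A(R) *)
  (forall om : 'M[K[i]]_n -> K[i], R_tolerant_pure_state R om -> pure_stateA R om)
  /\ (* F is injective on R-tolerant pure states *)
  (forall om1 om2 : 'M[K[i]]_n -> K[i],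
     R_tolerant_pure_state R om1 -> R_tolerant_pure_state R om2 ->
     (forall a, in_AR R a -> om1 a = om2 a) -> forall a, om1 a = om2 a)
  /\ (* F is onto the pure states of A(R) *)
  (forall phi : 'M[K[i]]_n -> K[i], pure_stateA R phi ->
     exists om, R_tolerant_pure_state R om /\ forall a, in_AR R a -> om a = phi a).
Proof.
split; [|split; [|split]].
- move=> v Hu; split.
    move=> Hp; apply: (pure_tol HR Hu); apply: (pure_ext HR _ Hp).
    by move=> a Aa; rewrite trTq.
  move=> Ht; apply: (pure_ext HR _ (tol_pure HR Hu Ht)).
  by move=> a Aa; rewrite trTq.
- move=> om [_ [v [Hu [Ht Hom]]]].
  apply: (pure_ext HR _ (tol_pure HR Hu Ht)).
  by move=> a _; rewrite Hom trPv.
- move=> om1 om2 [_ [v1 [Hu1 [Ht1 E1]]]] [_ [v2 [Hu2 [Ht2 E2]]]] Hag a.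
  have Hpsd : psd (Pv v2) by rewrite PvE; apply: outer_psd.
  have Htr : \tr (Pv v2) = 1.
    by rewrite -[Pv v2]mulmx1 trPv; apply/unitE.
  have EP : Pv v2 = Pv v1.
    apply: (rho_unique HR Hu1 Ht1 Hpsd Htr) => b Ab Hb H0.
    by rewrite -E2 -Hag // E1 trPv.
  by rewrite E1 E2 EP.
- move=> phi Hp.
  have [X [HX Hphi]] := pure_vec HR Hp.
  pose v := fun i => X i 0.
  have Xv : colv v = X by apply/matrixP => i j; rewrite (ord1 j) mxE.
  have Hu : unit_vec v by apply/unitE; rewrite Xv.
  have Ht : R_tolerant R v.
    apply: (pure_tol HR Hu); apply: (pure_ext HR _ Hp).
    by move=> a Aa; rewrite Xv Hphi.
  exists (fun a => \tr (Pv v *m a)); split.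
    split; last by exists v.
    apply: (pure_ext (full_tol n) _ (tol_pure (full_tol n) Hu (tol_full Ht))).
    by move=> a _; rewrite trPv.
  by move=> a Aa; rewrite trPv Xv Hphi.
Qed.
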